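(* Consider a multilayer network with $M$ layers, where layer $h\in\{1,\dots,M\}$ has $N_h$ nodes, node set $V=\{(i,h): h=1,\dots,M,\ i=1,\dots,N_h\}$, and nonnegative weights $w_{ij}(hk)$ between node $i$ of layer $h$ and node $j$ of layer $k$. Assume the network is weighted, undirected and connected, so that the multilayer Laplacian $\mathcal{L}$ (defined in the context) is symmetric: $\mathcal{L}_{(i,h),(j,k)}=\mathcal{L}_{(j,k),(i,h)}$. Let each $f_{ih}:\mathbb{R}\to\mathbb{R}$, $(i,h)\in V$, be convex (and differentiable with Lipschitz continuous derivative), let $\tilde f(Y)=\sum_{(i,h)\in V} f_{ih}(y_{ih})$ for $Y=(y_{ih})\in\mathbb{R}^V$, and consider the augmented Lagrangian $$\mathcal{L}_m(Y,\Lambda)=\tilde f(Y)+\langle \Lambda,\mathcal{L}Y\rangle+\tfrac12\langle Y,\mathcal{L}Y\rangle,\qquad Y,\Lambda\in\mathbb{R}^V,$$ associated with the problem $\min_{Y}\tilde f(Y)$ subject to $\mathcal{L}Y=0$. Let $U\in\mathbb{R}^V$ be the all-ones tensor. Then: (1) If $(Y^\star,\Lambda^\star)$ is a saddle point of $\mathcal{L}_m$ (i.e. a solution of $\min_Y\max_\Lambda\mathcal{L}_m$), then $(Y^\star,\Lambda^\star+\gamma U)$ is also a saddle (minimax) point for every $\gamma\in\mathbb{R}$. (2) If $(Y^\star,\Lambda^\star)$ is a saddle point of $\mathcal{L}_m$, then $Y^\star=x^\star U$ for some $x^\star\in\mathbb{R}$, and $x^\star$ solves the primal problem $\min_{x\in\mathbb{R}}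 \sum_{(i,h)\in V} f_{ih}(x)$. (3) There exists a saddle point $(Y^\star,\Lambda^\star)$ of $\mathcal{L}_m$ satisfying $\mathcal{L}\Lambda^\star+\nabla\tilde f(Y^\star)=0$.
   Context: For $T\in\mathbb{R}^V$, $(\mathcal{L}T)_{ih}=\sum_{k=1}^M\sum_{j=1}^{N_k} l_{ij}(hk)\,t_{jk}$, where $l_{ij}(hk)=\Big[\sum_{n=1}^M\sum_{m=1}^{N_n} w_{mi}(nh)\Big]\delta_{ij}\delta_{hk}-w_{ij}(hk)$ (the multilayer combinatorial Laplacian tensor; $\delta$ is the Kronecker delta, and $w_{ij}(hh)$ are intralayer weights, $w_{ij}(hk)$ for $h\ne k$ interlayer weights). Undirected means $w_{ij}(hk)=w_{ji}(kh)$; connected means the graph on $V$ with an edge between $(i,h)$ and $(j,k)$ whenever $w_{ij}(hk)>0$ is connected. $\langle A,B\rangle=\sum_{(i,h)\in V}a_{ih}b_{ih}$. $\nabla\tilde f(Y)$ has components $f_{ih}'(y_{ih})$. *)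

(* Defs.v *)
From HB Require Import structures.
From mathcomp Require Import all_boot all_order all_algebra.
From mathcomp Require Import all_classical all_reals all_analysis.
Set Implicit Arguments. Unset Strict Implicit. Unset Printing Implicit Defensive.
Import Order.TTheory GRing.Theory Num.Theory.
Local Open Scope ring_scope.

Section Multilayer.
Variables (R : realType) (M : nat) (N : 'I_M -> nat).

(* node (i,h) of layer h is encoded as Tagged h i, i : 'I_(N h) *)
Definition node : finType := {h : 'I_M & 'I_(N h)}.

Variable w : node -> node -> R.

Definition lap_entry (a b : node) : R :=
  (\sum_(c : node) w c a) * (a == b)%:R - w a b.

Definition mlap (T : node -> R) : node -> R :=
  fun a => \sum_(b : node) lap_entry a b * T b.

Definition inner (A B : node -> R) : R := \sum_(a : node) A a * B a.

Definition all_ones : node -> R := fun _ => 1.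

Definition undirected : Prop := forall a b, w a b = w b a.

Definition connected_net : Prop :=
  forall a b, connect [rel x y : node | 0 < w x y] a b.

Variable f : node -> R -> R.

Definition ftilde (Y : node -> R) : R := \sum_(a : node) f a (Y a).

Definition aug_lag (Y Lam : node -> R) : R :=
  ftilde Y + inner Lam (mlap Y) + 2^-1 * inner Y (mlap Y).

Definition saddle (Y Lam : node -> R) : Prop :=
  (forall Lam', aug_lag Y Lam' <= aug_lag Y Lam) /\
  (forall Y', aug_lag Y Lam <= aug_lag Y' Lam).

Definition grad_ftilde (Y : node -> R) : node -> R :=
  fun a => derive1 (f a) (Y a).

End Multilayer.

Definition convex_fun {R : realType} (g : R -> R) : Prop :=
  forall x y t : R, 0 <= t -> t <= 1 ->
    g (t * x + (1 - t) * y) <= t * g x + (1 - t) * g y.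

Definition diff_lipschitz_deriv {R : realType} (g : R -> R) : Prop :=
  (forall x : R, derivable g x 1) /\
  exists L : R, forall x y : R, `|derive1 g x - derive1 g y| <= L * `|x - y|.

(* Main.v *)
Require Import Defs.
From HB Require Import structures.
From mathcomp Require Import all_boot all_order all_algebra.
From mathcomp Require Import all_classical all_reals all_analysis.
From mathcomp Require Import ring lra zify.
Import Order.TTheory GRing.Theory Num.Theory.
Local Open Scope ring_scope.
Import numFieldNormedType.Exports.

Lemma tangent_ineq (R : realType) (f : R -> R) (x y : R) :
  (forall x y t : R, 0 <= t -> t <= 1 ->
    f (t * x + (1 - t) * y) <= t * f x + (1 - t) * f y) ->
  derivable f x 1 ->
  f x + derive1 f x * (y - x) <= f y.
Proof.
move=> cvx dx.
have dif : differentiable f x by apply/derivable1_diffP.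
have dd : derivable f x (y - x) by exact: diff_derivable.
have -> : derive1 f x * (y - x) = 'D_(y - x) f x.
  rewrite derive1E !deriveE // -[in RHS](mulr1 (y - x)).
  by rewrite -[(y - x) * 1]/((y - x) *: (1:R)) linearZ /= mulrC.
rewrite addrC -lerBrDr.
rewrite ['D_(y - x) f x]cvg_at_rightE; last exact: dd.
apply: limr_le.
  rewrite -(cvg_at_rightE (fun h : R => h^-1 *: ((f \o shift x) _ - f x))) //.
  apply: cvg_trans dd; apply: cvg_app.
  move=> A [e egt0 Ae]; exists e => // z ze zgt0; apply: Ae => //.
  exact/lt0r_neq0.
near=> h.
have h0 : 0 < h by near: h; exists 1 => //=.
have h1 : h <= 1.
  near: h; exists 1 => //= z; rewrite /= distrC subr0 => /ltW zl z0.
  by apply: le_trans (ler_norm _) zl.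
rewrite /= -[h^-1 *: _]/(h^-1 * _) ler_pdivrMl //.
rewrite lerBlDr.
have := cvx y x h (ltW h0) h1.
suff -> : h * y + (1 - h) * x = h *: (y - x) + x.
  move=> H; apply: (le_trans H); rewrite le_eqVlt; apply/orP; left; apply/eqP; ring.
by rewrite /GRing.scale /=; ring.
Unshelve. all: by end_near. Qed.

Lemma is_derive_bigsum (R : realType) (I : Type) (r : seq I) (f : I -> R -> R) x :
  (forall a, derivable (f a) x 1) ->
  is_derive x 1 (fun t => \sum_(a <- r) f a t) (\sum_(a <- r) 'D_1 (f a) x).
Proof.
move=> df; elim: r => [|a r IH].
  have -> : (fun t : R => \sum_(a <- [::]) f a t) = cst 0.
    by apply: funext => t; rewrite big_nil.
  by rewrite big_nil; exact: is_derive_cst.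
have -> : (fun t : R => \sum_(b <- a :: r) f b t) = f a + (fun t => \sum_(b <- r) f b t).
  by apply: funext => t; rewrite big_cons.
by rewrite big_cons; apply: is_deriveD.
Qed.

Lemma sum_deriv_min (R : realType) (I : finType) (f : I -> R -> R) x0 :
  (forall a x, derivable (f a) x 1) ->
  (forall x, \sum_a f a x0 <= \sum_a f a x) -> \sum_a derive1 (f a) x0 = 0.
Proof.
move=> df mn.
have H : is_derive x0 1 (fun t => \sum_a f a t) 0.
  apply: (@derive1_at_min _ _ (x0 - 1) (x0 + 1)).
  - lra.
  - move=> t _; have := @is_derive_bigsum _ _ (index_enum I) f t (df^~ t).
    by move=> [].
  - rewrite in_itv /=; apply/andP; split; lra.
  - by move=> t _; apply: mn.
have H2 := @is_derive_bigsum _ _ (index_enum I) f x0 (df^~ x0).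
have := @derive_val _ _ _ _ _ _ _ H; have := @derive_val _ _ _ _ _ _ _ H2.
move=> -> E; rewrite -[RHS]E.
by apply: eq_bigr => a _; rewrite derive1E.
Qed.

Section Lap.
Variables (R : realType) (M : nat) (N : 'I_M -> nat) (w : node N -> node N -> R).
Hypothesis wU : undirected w.

Lemma lapC a b : lap_entry w a b = lap_entry w b a.
Proof.
rewrite /lap_entry wU; case: (eqVneq a b) => [->//|ab].
by rewrite !mulr0.
Qed.

Lemma colsum b : \sum_a lap_entry w a b = 0.
Proof.
rewrite /lap_entry sumrB; apply/eqP; rewrite subr_eq0; apply/eqP.
rewrite (bigD1 b) //= eqxx mulr1 [X in _ + X]big1 ?addr0 //.
by move=> a /negbTE ->; rewrite mulr0.
Qed.

Lemma rowsum a : \sum_b lap_entry w a b = 0.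
Proof. by rewrite -[RHS](colsum a); apply: eq_bigr => b _; rewrite lapC. Qed.

Lemma mlap_const c a : mlap w (fun _ => c) a = 0.
Proof. by rewrite /mlap -mulr_suml rowsum mul0r. Qed.

Lemma sum_mlap T : \sum_a mlap w T a = 0.
Proof.
rewrite /mlap exchange_big /= big1 // => b _.
by rewrite -mulr_suml colsum mul0r.
Qed.

Lemma inner_mlapC A B : inner A (mlap w B) = inner B (mlap w A).
Proof.
rewrite /inner /mlap.
under eq_bigr do rewrite mulr_sumr.
under [RHS]eq_bigr do rewrite mulr_sumr.
rewrite exchange_big /=; apply: eq_bigr => b _; apply: eq_bigr => a _.
by rewrite lapC; ring.
Qed.

Lemma mlapE T a : mlap w T a = \sum_b w a b * (T a - T b).
Proof.
rewrite /mlap /lap_entry.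
under eq_bigr do rewrite mulrBl.
under [RHS]eq_bigr do rewrite mulrBr.
rewrite !sumrB; congr (_ - _).
rewrite (bigD1 a) //= eqxx mulr1 [X in _ + X]big1 ?addr0; last first.
  by move=> b; rewrite eq_sym => /negbTE ->; rewrite mulr0 mul0r.
rewrite -mulr_suml; congr (_ * _); apply: eq_bigr => b _.
by rewrite wU.
Qed.

Lemma quad T : 2 * inner T (mlap w T) = \sum_a \sum_b w a b * (T a - T b) ^+ 2.
Proof.
have E : inner T (mlap w T) = \sum_a \sum_b w a b * (T a * (T a - T b)).
  rewrite /inner; apply: eq_bigr => a _; rewrite mlapE mulr_sumr.
  by apply: eq_bigr => b _; ring.
have E2 : inner T (mlap w T) = \sum_a \sum_b w a b * (T b * (T b - T a)).
  rewrite E exchange_big /=; apply: eq_bigr => a _; apply: eq_bigr => b _.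
  by rewrite wU.
rewrite mulr2n mulrDl mul1r {1}E E2 -big_split /=.
apply: eq_bigr => a _; rewrite -big_split /=; apply: eq_bigr => b _; ring.
Qed.

Hypothesis w0 : forall a b, 0 <= w a b.

Lemma quad_ge0 T : 0 <= inner T (mlap w T).
Proof.
have : 0 <= 2 * inner T (mlap w T).
  by rewrite quad; do 2 (apply: sumr_ge0 => ? _); rewrite mulr_ge0 ?sqr_ge0.
by rewrite pmulr_rge0.
Qed.

Hypothesis wC : connected_net w.

Lemma ker_const T : (forall a, mlap w T a = 0) -> forall a b, T a = T b.
Proof.
move=> H.
have S0 : \sum_a \sum_b w a b * (T a - T b) ^+ 2 = 0.
  by rewrite -quad /inner big1 ?mulr0 // => a _; rewrite H mulr0.
have edge : forall a b, 0 < w a b -> T a = T b.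
  move=> a b wab.
  have /eqP := S0; rewrite psumr_eq0 => [/allP /(_ a (mem_index_enum a))|].
    rewrite psumr_eq0 => [/allP /(_ b (mem_index_enum b))|].
      rewrite /= mulf_eq0 (gt_eqF wab) /= sqrf_eq0 subr_eq0 => /eqP //.
    by move=> c _; rewrite mulr_ge0 ?sqr_ge0.
  by move=> c _; apply: sumr_ge0 => d _; rewrite mulr_ge0 ?sqr_ge0.
move=> a b.
have cl : fingraph.closed [rel x y : node N | 0 < w x y] [pred x | T x == T a].
  by move=> x y /= /edge E; rewrite !inE /= E.
have := closed_connect cl (wC a b).
by rewrite !inE /= eqxx => /esym/eqP ->.
Qed.

End Lap.

Section Mx.
Variables (R : realType) (M : nat) (N : 'I_M -> nat) (w : node N -> node N -> R).
Hypothesis wU : undirected w.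
Hypothesis w0 : forall a b, 0 <= w a b.
Hypothesis wC : connected_net w.

Local Notation n := #|{: node N}|.
Local Notation ev := (@enum_val (node N) (mem {: node N})).

Lemma sumE (F : node N -> R) : \sum_a F a = \sum_(i < n) F (ev i).
Proof.
rewrite (reindex ev) //; exists enum_rank => i _; [exact: enum_valK | exact: enum_rankK].
Qed.

Definition LA : 'M[R]_n := \matrix_(i, j) lap_entry w (ev i) (ev j).

Lemma rowLA (r : 'rV[R]_n) a :
  (r *m LA) 0 (enum_rank a) = mlap w (fun b => r 0 (enum_rank b)) a.
Proof.
rewrite mxE /mlap sumE; apply: eq_bigr => k _.
by rewrite mxE enum_valK enum_rankK (lapC _ _ _ _ wU) mulrC.
Qed.

Lemma solve_lap (g : node N -> R) : \sum_a g a = 0 ->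
  exists Lam, forall a, mlap w Lam a = g a.
Proof.
move=> g0.
pose u : 'cV[R]_n := const_mx 1.
pose v : 'rV[R]_n := \row_j g (ev j).
have Au : LA *m u = 0.
  apply/matrixP => i j; rewrite !mxE -[RHS](rowsum _ _ _ _ wU (ev i)) sumE.
  by apply: eq_bigr => k _; rewrite !mxE mulr1.
have vu : v *m u = 0.
  apply/matrixP => i j; rewrite !mxE -[RHS]g0 sumE.
  by apply: eq_bigr => k _; rewrite !mxE mulr1.
have kerA : (kermx LA <= u^T)%MS.
  apply/row_subP => i; set r := row i (kermx LA).
  have rA : r *m LA = 0 by rewrite /r -row_mul mulmx_ker row0.
  clearbody r.
  have HT : forall a, mlap w (fun b => r 0 (enum_rank b)) a = 0.
    by move=> a; rewrite -rowLA rA mxE.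
  have -> : r = r 0 i *: u^T.
    apply/matrixP => x y; rewrite (ord1 x) mxE [u^T _ _]mxE [u _ _]mxE mulr1.
    have := ker_const _ _ _ _ wU w0 wC _ HT (ev y) (ev i).
    by rewrite !enum_valK.
  exact: scalemx_sub (submx_refl _).
have rk : (\rank (kermx u) <= \rank LA)%N.
  have h1 := mxrank_ker LA; have h2 := rank_leq_row LA.
  have h3 := mxrankS kerA; rewrite mxrank_tr in h3.
  rewrite mxrank_ker; lia.
have AK : (LA <= kermx u)%MS by apply/sub_kermxP.
have KA : (kermx u <= LA)%MS.
  have [_ <-] := mxrank_leqif_sup AK.
  by rewrite eqn_leq rk mxrankS.
have vK : (v <= kermx u)%MS by apply/sub_kermxP.
have vA : (v <= LA)%MS := submx_trans vK KA.
have E := mulmxKpV vA.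
exists (fun b => (v *m pinvmx LA) 0 (enum_rank b)) => a.
by rewrite -rowLA E mxE enum_rankK.
Qed.

End Mx.

Section Main.
Variables (R : realType) (M : nat) (N : 'I_M -> nat) (w : node N -> node N -> R).
Variable f : node N -> R -> R.
Hypothesis wU : undirected w.

Lemma aug_lag_ker Z Lam : (forall a, mlap w Z a = 0) -> aug_lag w f Z Lam = ftilde f Z.
Proof.
move=> H; rewrite /aug_lag /inner !big1 ?mulr0 ?addr0 // => a _; by rewrite H mulr0.
Qed.

Lemma aug_lag_shift Z Lam gamma :
  aug_lag w f Z (fun a => Lam a + gamma * all_ones R a) = aug_lag w f Z Lam.
Proof.
rewrite /aug_lag /inner; congr (_ + _ + _).
under eq_bigr do rewrite mulrDl.
rewrite big_split /=.
have -> : \sum_a gamma * all_ones R a * mlap w Z a = 0.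
  under eq_bigr do rewrite /all_ones mulr1.
  by rewrite -mulr_sumr sum_mlap mulr0.
by rewrite addr0.
Qed.

End Main.

Theorem lemma1 (R : realType) (M : nat) (N : 'I_M -> nat)
    (w : node N -> node N -> R) (f : node N -> R -> R)
    (w_ge0 : forall a b, 0 <= w a b)
    (w_undir : undirected w)
    (w_conn : connected_net w)
    (f_conv : forall a, convex_fun (f a))
    (f_smooth : forall a, diff_lipschitz_deriv (f a)) :
  (* (1) *)
  (forall (Y Lam : node N -> R), saddle w f Y Lam ->
     forall gamma : R, saddle w f Y (fun a => Lam a + gamma * all_ones R a)) /\
  (* (2) *)
  (forall (Y Lam : node N -> R), saddle w f Y Lam ->
     exists xs : R, Y = (fun a => xs * all_ones R a) /\
       forall x : R, \sum_(a : node N) f a xs <= \sum_(a : node N) f a x) /\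
  (* (3), under the standing assumption that the primal problem has a solution *)
  ((exists x0 : R, forall x : R,
       \sum_(a : node N) f a x0 <= \sum_(a : node N) f a x) ->
   exists (Y Lam : node N -> R), saddle w f Y Lam /\
     forall a, mlap w Lam a + grad_ftilde f Y a = 0).
Proof.
split.
  move=> Y Lam [s1 s2] gamma; split => [Lam'|Y']; rewrite !aug_lag_shift.
    exact: s1.
  exact: s2.
split.
  move=> Y Lam [s1 s2].
  have LY : forall a, mlap w Y a = 0.
    have := s1 (fun a => Lam a + mlap w Y a).
    rewrite /aug_lag {1}/inner.
    under eq_bigr do rewrite mulrDl.
    rewrite big_split /= -/(inner Lam (mlap w Y)) => H.
    have H2 : \sum_a mlap w Y a * mlap w Y a <= 0 by lra.
    have H3 : \sum_a mlap w Y a * mlap w Y a = 0.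
      by apply/eqP; rewrite eq_le H2 sumr_ge0 // => a _; rewrite -expr2 sqr_ge0.
    move=> a; move/eqP: H3; rewrite psumr_eq0 => [/allP /(_ a (mem_index_enum a))|].
      by rewrite /= mulf_eq0 orbb => /eqP.
    by move=> b _; rewrite -expr2 sqr_ge0.
  have Yc := ker_const _ _ _ _ w_undir w_ge0 w_conn _ LY.
  pose xs := if [pick a : node N] is Some a0 then Y a0 else 0.
  have EY : Y = (fun a => xs * all_ones R a).
    apply: funext => b; rewrite /all_ones mulr1 /xs.
    case: pickP => [a0 _|/(_ b) //]; exact: Yc.
  exists xs; split => // x.
  have := s2 (fun _ => x).
  rewrite aug_lag_ker // aug_lag_ker; last by move=> a; exact: (mlap_const _ _ _ _ w_undir).
  by rewrite /ftilde EY /all_ones; under eq_bigr do rewrite mulr1.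
move=> [x0 mn].
pose g a := derive1 (f a) x0.
have dfa : forall a x, derivable (f a) x 1 by move=> a x; exact: (f_smooth a).1.
have g0 : \sum_a g a = 0 by apply: sum_deriv_min.
have [Lam HL] : exists Lam, forall a, mlap w Lam a = - g a.
  apply: (solve_lap _ _ _ _ w_undir w_ge0 w_conn); by rewrite sumrN g0 oppr0.
have Lc : forall a, mlap w (fun _ => x0) a = 0 by move=> a; exact: (mlap_const _ _ _ _ w_undir).
exists (fun _ => x0), Lam; split; last first.
  by move=> a; rewrite HL /grad_ftilde addNr.
split => [Lam'|Y']; first by rewrite !aug_lag_ker.
rewrite [X in X <= _]aug_lag_ker // /aug_lag.
have T1 : \sum_a (f a x0 + g a * (Y' a - x0)) <= ftilde f Y'.
  by apply: ler_sum => a _; apply: tangent_ineq; [exact: f_conv | exact: dfa].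
have T2 : \sum_a (f a x0 + g a * (Y' a - x0)) = ftilde f (fun _ => x0) + \sum_a g a * Y' a.
  rewrite big_split /=; congr (_ + _).
  under eq_bigr do rewrite mulrBr.
  by rewrite sumrB -mulr_suml g0 mul0r subr0.
have T3 : inner Lam (mlap w Y') = - \sum_a g a * Y' a.
  rewrite (inner_mlapC _ _ _ _ w_undir) /inner -sumrN; apply: eq_bigr => a _; rewrite HL; ring.
have T4 := quad_ge0 _ _ _ _ w_undir w_ge0 Y'.
lra.
Qed.
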